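(* Assume $G\in\mathcal{RH}_\infty$ and that $v$ is measurable, so the controller has the form $u=K\begin{bmatrix} y\\ v\end{bmatrix}$. Then $K$ is an output-rectifying retrofit controller if and only if $$K=\hat K R,\qquad R:=\begin{bmatrix} I & -G_{yv}\end{bmatrix},$$ where $\hat K$ is a stabilizing controller for $G_{yu}$. (That is, $K$ first forms the rectified output $\hat y=y-G_{yv}v$ and then applies $u=\hat K\hat y$.)
   Context: A subsystem is a proper real rational transfer matrix $G$ with inputs $(v,d,u)$ (interaction input, disturbance input, control input) and outputs $(w,z,y)$ (interaction output, evaluation output, measurement output), with blocks $G_{ab}$ denoting the transfer matrix from input $b$ to output $a$. $\mathcal{RH}_\infty$ is the set of stable, proper, real rational transfer matrices. For transfer matrices $H$ and $C$, $C$ is a stabilizing controller for $H$ if the positive feedback loop $y=Hu$, $u=Cy$ is internally stable (for $H\in\mathcal{RH}_\infty$ these are exactly $C=(I+\hat QH)^{-1}\hat Q$, $\hat Q\in\mathcal{RH}_\infty$). When $v$ is measurable, the measurement output is augmented to $(y,v)$ with $G_{(y,v)v}:=\begin{bmatrix} G_{yv}\\ I\end{bmatrix}$, $G_{(y,v)u}:=\begin{bmatrix} G_{yu}\\ 0\end{bmatrix}$. A controller $u=K\begin{bmatrix} y\\ v\end{bmatrix}$ is an output-rectifying retrofit controller if $K=(I+QG_{(y,v)u})^{-1}Q$ for some $Q\in\mathcal{RH}_\infty$ with $Q\,G_{(y,v)v}=0$. *)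

(* Defs.v *)
From HB Require Import structures.
From mathcomp Require Import all_boot all_order all_algebra.
Set Implicit Arguments. Unset Strict Implicit. Unset Printing Implicit Defensive.
Import Order.TTheory GRing.Theory Num.Theory.
Local Open Scope ring_scope.

(* Real rational functions in the variable s, with real coefficients in an
   arbitrary real closed field R (the reals being the intended instance). *)
Definition ratfun (R : rcfType) := {fraction {poly R}}.

Definition poly2frac (R : rcfType) (p : {poly R}) : ratfun R :=
  @FracField.tofrac _ p.

(* Complex numbers a + i b represented as pairs over R; evaluation of a real
   polynomial at a complex point (Horner scheme). *)
Definition cmul (R : rcfType) (x y : R * R) : R * R :=
  (x.1 * y.1 - x.2 * y.2, x.1 * y.2 + x.2 * y.1).
Definition cadd (R : rcfType) (x y : R * R) : R * R := (x.1 + y.1, x.2 + y.2).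
Definition ceval (R : rcfType) (p : {poly R}) (z : R * R) : R * R :=
  foldr (fun c acc => cadd (cmul acc z) (c, 0)) (0, 0) (polyseq p).

Definition hurwitz (R : rcfType) (q : {poly R}) : Prop :=
  forall a b : R, 0 <= a -> ceval q (a, b) <> (0, 0).

Definition RHinf (R : rcfType) (f : ratfun R) : Prop :=
  exists p q : {poly R},
    [/\ q != 0, f = poly2frac p / poly2frac q, (size p <= size q)%N & hurwitz q].

Definition RHinf_mx (R : rcfType) m n (M : 'M[ratfun R]_(m, n)) : Prop :=
  forall i j, RHinf (M i j).

(* C (m x p) is a stabilizing controller for H (p x m) in the positive feedback
   loop y = H u + d2, u = C y + d1: the loop is well defined (I - H C invertible)
   and all four closed-loop maps (d1,d2) -> (u,y) are in RH_infinity. *)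
Definition stabilizing (R : rcfType) p m
    (H : 'M[ratfun R]_(p, m)) (C : 'M[ratfun R]_(m, p)) : Prop :=
  [/\ (1%:M - H *m C) \in unitmx,
      RHinf_mx (invmx (1%:M - C *m H)),
      RHinf_mx (invmx (1%:M - C *m H) *m C),
      RHinf_mx (invmx (1%:M - H *m C) *m H)
    & RHinf_mx (invmx (1%:M - H *m C))].

(* Blocks of the subsystem G with inputs (v,d,u) and outputs (w,z,y). *)
Section Blocks.
Variables (R : rcfType) (nw nz ny nv nd nu : nat).
Variable G : 'M[ratfun R]_(nw + (nz + ny), nv + (nd + nu)).
Definition G_yv : 'M[ratfun R]_(ny, nv) := lsubmx (dsubmx (dsubmx G)).
Definition G_yu : 'M[ratfun R]_(ny, nu) := rsubmx (rsubmx (dsubmx (dsubmx G))).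
(* augmented measurement output (y, v) *)
Definition G_yvv : 'M[ratfun R]_(ny + nv, nv) := col_mx G_yv 1%:M.
Definition G_yvu : 'M[ratfun R]_(ny + nv, nu) := col_mx G_yu 0.
End Blocks.

Definition output_rectifying_retrofit (R : rcfType) (nw nz ny nv nd nu : nat)
    (G : 'M[ratfun R]_(nw + (nz + ny), nv + (nd + nu)))
    (K : 'M[ratfun R]_(nu, ny + nv)) : Prop :=
  exists Q : 'M[ratfun R]_(nu, ny + nv),
    [/\ RHinf_mx Q,
        Q *m G_yvv G = 0,
        (1%:M + Q *m G_yvu G) \in unitmx
      & K = invmx (1%:M + Q *m G_yvu G) *m Q].

(* Main.v *)
Require Import Defs.
From HB Require Import structures.
From mathcomp Require Import all_boot all_order all_algebra.
From mathcomp Require Import complex.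
Import GRing.Theory.
Local Open Scope ring_scope.

Section Scal.
Variable R : rcfType.

Lemma ceval_complex (p : {poly R}) a b :
  ceval p (a, b) =
  (Re (map_poly (real_complex R) p).[Complex a b],
   Im (map_poly (real_complex R) p).[Complex a b]).
Proof.
rewrite map_polyE horner_Poly /ceval.
elim: (polyseq p) => [|c s IH] //=.
rewrite IH /cmul /cadd /=.
case: (horner_rec _ _) => x y /=.
by [].
Qed.

Lemma hurwitzM (p q : {poly R}) : hurwitz p -> hurwitz q -> hurwitz (p * q).
Proof.
move=> hp hq a b ha.
rewrite ceval_complex rmorphM hornerM => -[e1 e2].
have : (map_poly (real_complex R) p).[Complex a b] *
       (map_poly (real_complex R) q).[Complex a b] = 0.
  by case: (_ * _) e1 e2 => x y /= -> ->.
move/eqP; rewrite mulf_eq0 => /orP[] /eqP e.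
- by apply: (hp a b ha); rewrite ceval_complex e.
- by apply: (hq a b ha); rewrite ceval_complex e.
Qed.

Lemma hurwitz1 : hurwitz (1 : {poly R}).
Proof.
move=> a b _; rewrite ceval_complex rmorph1 hornerC /= => -[].
by apply/eqP; rewrite oner_eq0.
Qed.

Lemma RHinf0 : @RHinf R 0.
Proof.
exists 0, 1; split; rewrite ?oner_eq0 ?size_poly0 //; last exact: hurwitz1.
by rewrite /poly2frac tofrac0 mul0r.
Qed.

Lemma RHinf1 : @RHinf R 1.
Proof.
exists 1, 1; split; rewrite ?oner_eq0 //; last exact: hurwitz1.
by rewrite /poly2frac tofrac1 divr1.
Qed.

Lemma RHinfN (f : ratfun R) : RHinf f -> RHinf (- f).
Proof.
case=> p [q [q0 -> sz hq]]; exists (- p), q; split => //.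
  by rewrite /poly2frac tofracN mulNr.
by rewrite size_polyN.
Qed.

Lemma tofrac_neq0 (q : {poly R}) : q != 0 -> poly2frac q != 0.
Proof. by rewrite /poly2frac tofrac_eq0. Qed.

Lemma RHinfM (f g : ratfun R) : RHinf f -> RHinf g -> RHinf (f * g).
Proof.
case=> p1 [q1 [q10 -> s1 h1]]; case=> p2 [q2 [q20 -> s2 h2]].
exists (p1 * p2), (q1 * q2); split.
- by rewrite mulf_neq0.
- by rewrite /poly2frac !tofracM mulf_div.
- rewrite (size_mul q10 q20).
  apply: (leq_trans (size_polyMleq p1 p2)).
  by rewrite -!subn1 leq_sub2r // leq_add.
- exact: hurwitzM.
Qed.

Lemma RHinfD (f g : ratfun R) : RHinf f -> RHinf g -> RHinf (f + g).
Proof.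
case=> p1 [q1 [q10 -> s1 h1]]; case=> p2 [q2 [q20 -> s2 h2]].
exists (p1 * q2 + p2 * q1), (q1 * q2); split.
- by rewrite mulf_neq0.
- rewrite addf_div ?tofrac_neq0 //.
  by rewrite /poly2frac !tofracM tofracD !tofracM.
- have Hq1 : (0 < size q1)%N by rewrite size_poly_gt0.
  have Hq2 : (0 < size q2)%N by rewrite size_poly_gt0.
  apply: (leq_trans (size_polyD _ _)).
  rewrite (size_mul q10 q20) geq_max; apply/andP; split.
  + apply: (leq_trans (size_polyMleq _ _)).
    by rewrite -!subn1 leq_sub2r // leq_add.
  + apply: (leq_trans (size_polyMleq _ _)).
    by rewrite addnC -!subn1 leq_sub2r // leq_add.
- exact: hurwitzM.
Qed.

End Scal.
Section Mx.
Variable R : rcfType.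
Implicit Types m n p : nat.

Lemma RHmxD m n (A B : 'M[ratfun R]_(m, n)) :
  RHinf_mx A -> RHinf_mx B -> RHinf_mx (A + B).
Proof. by move=> hA hB i j; rewrite mxE; apply: RHinfD. Qed.

Lemma RHmxN m n (A : 'M[ratfun R]_(m, n)) : RHinf_mx A -> RHinf_mx (- A).
Proof. by move=> hA i j; rewrite mxE; apply: RHinfN. Qed.

Lemma RHmxM m n p (A : 'M[ratfun R]_(m, n)) (B : 'M[ratfun R]_(n, p)) :
  RHinf_mx A -> RHinf_mx B -> RHinf_mx (A *m B).
Proof.
move=> hA hB i j; rewrite mxE.
apply: (big_ind (@RHinf R)); first exact: RHinf0.
  by move=> x y; apply: RHinfD.
by move=> k _; apply: RHinfM.
Qed.

Lemma RHmx1 n : RHinf_mx (1%:M : 'M[ratfun R]_n).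
Proof. by move=> i j; rewrite mxE; case: (i == j); [exact: RHinf1|exact: RHinf0]. Qed.

Lemma RHmx0 m n : RHinf_mx (0 : 'M[ratfun R]_(m, n)).
Proof. by move=> i j; rewrite mxE; exact: RHinf0. Qed.

Lemma RHmx_l m n1 n2 (A : 'M[ratfun R]_(m, n1 + n2)) : RHinf_mx A -> RHinf_mx (lsubmx A).
Proof. by move=> hA i j; rewrite mxE. Qed.
Lemma RHmx_r m n1 n2 (A : 'M[ratfun R]_(m, n1 + n2)) : RHinf_mx A -> RHinf_mx (rsubmx A).
Proof. by move=> hA i j; rewrite mxE. Qed.
Lemma RHmx_d m1 m2 n (A : 'M[ratfun R]_(m1 + m2, n)) : RHinf_mx A -> RHinf_mx (dsubmx A).
Proof. by move=> hA i j; rewrite mxE. Qed.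

Lemma RHmx_row m n1 n2 (A : 'M[ratfun R]_(m, n1)) (B : 'M[ratfun R]_(m, n2)) :
  RHinf_mx A -> RHinf_mx B -> RHinf_mx (row_mx A B).
Proof. by move=> hA hB i j; rewrite mxE; case: splitP. Qed.

End Mx.
Lemma inv_of_mul {R : comUnitRingType} {n} {A B : 'M[R]_n} :
  A *m B = 1%:M -> invmx A = B.
Proof.
move=> AB; have [uA _] := mulmx1_unit AB.
by rewrite -[invmx A]mulmx1 -AB mulmxA mulVmx // mul1mx.
Qed.

Theorem proposition1 (R : rcfType) (nw nz ny nv nd nu : nat)
    (G : 'M[ratfun R]_(nw + (nz + ny), nv + (nd + nu)))
    (HG : RHinf_mx G)
    (K : 'M[ratfun R]_(nu, ny + nv)) :
  output_rectifying_retrofit G K <->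
  exists Khat : 'M[ratfun R]_(nu, ny),
    stabilizing (G_yu G) Khat /\
    K = Khat *m row_mx 1%:M (- G_yv G).
Proof.
have HGu : RHinf_mx (G_yu G).
  by apply: RHmx_r; apply: RHmx_r; apply: RHmx_d; apply: RHmx_d.
have HGv : RHinf_mx (G_yv G).
  by apply: RHmx_l; apply: RHmx_d; apply: RHmx_d.
set Gu := G_yu G in HGu *; set Gv := G_yv G in HGv *.
split.
- case=> Q [RQ HQ0 UM HK].
  set Q1 := lsubmx Q; set Q2 := rsubmx Q.
  have RQ1 : RHinf_mx Q1 by apply: RHmx_l.
  have EQ : Q = Q1 *m row_mx 1%:M (- Gv).
    have H0 : Q1 *m Gv + Q2 = 0.
      by rewrite -HQ0 /G_yvv -[Q]hsubmxK mul_row_col mulmx1.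
    rewrite mul_mx_row mulmx1 mulmxN -[Q]hsubmxK; congr row_mx.
    by rewrite -/Q2 -(addKr (Q1 *m Gv) Q2) H0 addr0.
  have EQG : Q *m G_yvu G = Q1 *m Gu.
    by rewrite EQ /G_yvu -mulmxA mul_row_col mul1mx mulmx0 addr0.
  rewrite EQG in UM HK.
  set M := 1%:M + Q1 *m Gu in UM HK.
  exists (invmx M *m Q1); split; last by rewrite HK EQ mulmxA.
  have E1 : 1%:M - invmx M *m Q1 *m Gu = invmx M.
    apply/eqP; rewrite subr_eq -mulmxA -{1}(mulmx1 (invmx M)) -mulmxDr.
    by rewrite mulVmx.
  set N := 1%:M + Gu *m Q1.
  have E2 : (1%:M - Gu *m (invmx M *m Q1)) *m N = 1%:M.
    rewrite /N mulmxDr mulmx1 mulmxBl mul1mx.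
    have key : Gu *m (invmx M *m Q1) + Gu *m (invmx M *m Q1) *m (Gu *m Q1)
              = Gu *m Q1.
      rewrite -mulmxA -mulmxDr; congr (Gu *m _).
      rewrite -mulmxA -mulmxDr mulmxA -{1}(mul1mx Q1) -mulmxDl -/M.
      by rewrite mulmxA mulVmx // mul1mx.
    by rewrite -[X in _ + (X - _)]key addrK subrK.
  have [UN _] := mulmx1_unit E2.
  rewrite /stabilizing E1 invmxK (inv_of_mul E2).
  rewrite (mulmxA M (invmx M) Q1) (mulmxV UM) mul1mx.
  have RN : RHinf_mx N by apply: RHmxD; [apply: RHmx1| apply: RHmxM].
  split.
  + exact: UN.
  + by apply: RHmxD; [apply: RHmx1| apply: RHmxM].
  + exact: RQ1.
  + exact: RHmxM.
  + exact: RN.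
- case=> Kh [[U S1 S2 S3 S4] ->].
  set A := 1%:M - Kh *m Gu.
  have EA : A *m (1%:M + Kh *m invmx (1%:M - Gu *m Kh) *m Gu) = 1%:M.
    have e : (1%:M - Gu *m Kh) *m (invmx (1%:M - Gu *m Kh) *m Gu) = Gu.
      by rewrite mulmxA (mulmxV U) mul1mx.
    have e2 : A *m (Kh *m invmx (1%:M - Gu *m Kh) *m Gu) = Kh *m Gu.
      rewrite /A mulmxBl mul1mx -!mulmxA -mulmxBr; congr (Kh *m _).
      by rewrite -[X in _ = X]e mulmxBl mul1mx !mulmxA.
    by rewrite mulmxDr mulmx1 e2 /A subrK.
  have [UA _] := mulmx1_unit EA.
  set Q1 := invmx A *m Kh.
  exists (Q1 *m row_mx 1%:M (- Gv)).
  have EQG : Q1 *m row_mx 1%:M (- Gv) *m G_yvu G = Q1 *m Gu.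
    by rewrite /G_yvu -mulmxA mul_row_col mul1mx mulmx0 addr0.
  have EM : 1%:M + Q1 *m Gu = invmx A.
    by rewrite /Q1 -mulmxA -{1}(mulVmx UA) -mulmxDr /A subrK mulmx1.
  rewrite EQG EM unitmx_inv invmxK; split => //.
  + by apply: RHmxM => //; apply: RHmx_row => //; [apply: RHmx1|apply: RHmxN].
  + by rewrite -mulmxA /G_yvv mul_row_col mulmx1 mul1mx -/Gv addrN mulmx0.
  + by rewrite /Q1 !mulmxA mulmxV // mul1mx.
Qed.
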